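(* Consider a Why Query with the \texttt{SUM} aggregate, an attribute $X$ with filters $p_1,\dots,p_m$, a threshold $\varepsilon$, and a canonical predicate $P^C$. Then for every nonempty $P\subsetneq P^C$, $P$ is an actual cause and $\overline{P}=P^C\setminus P$ is a valid contingency for $P$, i.e. $\Delta(D-D_{\overline{P}}-D_P)\le\varepsilon<\Delta(D-D_{\overline{P}})$.
   Context: $D$ is a finite table of rows; $M$ is a numerical column; $s_1,s_2$ are disjoint sets of rows (sibling subspaces). $X$ is a categorical column with values $x_1,\dots,x_m$; filter $p_i$ is the condition $X=x_i$. A predicate is $P\subseteq\{p_1,\dots,p_m\}$, $D_P$ the set of rows whose $X$-value is in $P$; $D'-D''$ is set difference. For $D'\subseteq D$, $\Delta(D')=\sum_{t\in D'\cap s_1}t[M]-\sum_{t\in D'\cap s_2}t[M]$; $\Delta_i=\Delta(D_{p_i})$; $\Delta(D)>0$. $P$ is an actual cause if there is $\Gamma\subseteq\{p_1,\dots,p_m\}$ with $\Gamma\cap P=\emptyset$ (a valid contingency) such that $\Delta(D-D_\Gamma-D_P)\le\varepsilon<\Delta(D-D_\Gamma)$. Canonical predicate: order the filters so that $\Delta_1\ge\cdots\ge\Delta_m$ and let $j$ satisfy $\Delta(D)-\sum_{i=1}^{j}\Delta_i\le\varepsilon<\Delta(D)-\sum_{i=1}^{j-1}\Delta_i$; then $P^C=\{p_1,\dots,p_j\}$. *)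

(* Defs.v *)
From mathcomp Require Import all_boot all_order all_algebra.
Set Implicit Arguments. Unset Strict Implicit. Unset Printing Implicit Defensive.
Import Order.TTheory GRing.Theory Num.Theory.
Local Open Scope ring_scope.

Section WhyQuery.
Variables (R : realFieldType) (T : finType) (m : nat).
(* M : numerical column; s1 s2 : sibling subspaces;
   X : categorical column, with value x_i encoded as i : 'I_m,
   so that filter p_i is "X = x_i" and a predicate is a set of indices. *)
Variables (M : T -> R) (s1 s2 : {set T}) (X : T -> 'I_m).

Definition Delta (D' : {set T}) : R :=
  \sum_(t in D' :&: s1) M t - \sum_(t in D' :&: s2) M t.

Definition DP (D : {set T}) (P : {set 'I_m}) : {set T} :=
  [set t in D | X t \in P].

Definition Delta_i (D : {set T}) (i : 'I_m) : R := Delta (DP D [set i]).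

Definition valid_contingency (D : {set T}) (eps : R) (Gamma P : {set 'I_m}) :
  Prop :=
  [disjoint Gamma & P] /\
  Delta (D :\: DP D Gamma :\: DP D P) <= eps < Delta (D :\: DP D Gamma).

Definition actual_cause (D : {set T}) (eps : R) (P : {set 'I_m}) : Prop :=
  exists Gamma : {set 'I_m}, valid_contingency D eps Gamma P.

Definition sorted_filters (D : {set T}) : Prop :=
  forall i k : 'I_m, (i <= k)%N -> Delta_i D k <= Delta_i D i.

(* j defines the canonical predicate {p_1,...,p_j} (0-based: indices < j) *)
Definition canonical_index (D : {set T}) (eps : R) (j : nat) : Prop :=
  (j <= m)%N /\
  Delta D - \sum_(i < m | (i < j)%N) Delta_i D i <= eps <
  Delta D - \sum_(i < m | (i < j.-1)%N) Delta_i D i.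

Definition canonical_pred (j : nat) : {set 'I_m} := [set i : 'I_m | (i < j)%N].

End WhyQuery.

(* Main.v *)
Require Import Defs.
From mathcomp Require Import all_boot all_order all_algebra.
From mathcomp Require Import lra.
Import Order.TTheory GRing.Theory Num.Theory.
Local Open Scope ring_scope.

Section Aux.
Variables (R : realFieldType) (T : finType) (m : nat).
Variables (M : T -> R) (s1 s2 : {set T}) (X : T -> 'I_m).

Lemma sum_DP (D : {set T}) (Q : {set 'I_m}) (S : {set T}) :
  \sum_(t in DP X D Q :&: S) M t =
  \sum_(i in Q) \sum_(t in DP X D [set i] :&: S) M t.
Proof.
rewrite (partition_big X (mem Q)) /=; last first.
  by move=> t; rewrite !inE => /andP [/andP [_ ->]].
apply: eq_bigr => i iQ; apply: eq_bigl => t; rewrite !inE.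
case: (eqVneq (X t) i) => [->|]; rewrite ?iQ ?andbT ?andbF //.
Qed.

Lemma sum_diff (D E S : {set T}) : E \subset D ->
  \sum_(t in (D :\: E) :&: S) M t =
  \sum_(t in D :&: S) M t - \sum_(t in E :&: S) M t.
Proof.
move=> /subsetP sED.
have e1 : (D :&: S) :&: E = E :&: S.
  apply/setP => t; rewrite !inE.
  by case tE: (t \in E); rewrite ?andbF //= (sED t tE) andbT.
have e2 : (D :&: S) :\: E = (D :\: E) :&: S.
  by apply/setP => t; rewrite !inE; case: (t \in E); case: (t \in D); case: (t \in S).
by rewrite (big_setID E (A := D :&: S)) /= e1 e2 addrC addrK.
Qed.

Lemma Delta_diff (D : {set T}) (Q : {set 'I_m}) :
  Delta M s1 s2 (D :\: DP X D Q) =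
  Delta M s1 s2 D - \sum_(i in Q) Delta_i M s1 s2 X D i.
Proof.
have sub : DP X D Q \subset D by apply/subsetP => t; rewrite inE => /andP [].
rewrite /Delta /Delta_i /Delta !sum_diff // !sum_DP.
rewrite sumrB; lra.
Qed.

End Aux.

Theorem theorem3p17 (R : realFieldType) (T : finType) (m : nat)
  (M : T -> R) (s1 s2 : {set T}) (X : T -> 'I_m)
  (D : {set T}) (eps : R) (j : nat) :
  [disjoint s1 & s2] ->
  0 < Delta M s1 s2 D ->
  sorted_filters M s1 s2 X D ->
  canonical_index M s1 s2 X D eps j ->
  forall P : {set 'I_m},
    P != set0 -> P \proper canonical_pred m j ->
    actual_cause M s1 s2 X D eps P /\
    valid_contingency M s1 s2 X D eps (canonical_pred m j :\: P) P.
Proof.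
move=> _ _ sorted [jm /andP [H1 H2]] P P0 PC.
set a := Delta_i M s1 s2 X D.
set C := canonical_pred m j.
have SC : \sum_(i < m | (i < j)%N) a i = \sum_(i in C) a i.
  by apply: eq_bigl => i; rewrite inE.
have PsubC : P \subset C by case/andP: PC.
suff V : valid_contingency M s1 s2 X D eps (C :\: P) P.
  by split=> //; exists (C :\: P).
split.
  by rewrite disjoints_subset; apply/subsetP => i; rewrite !inE => /andP [].
have E : D :\: DP X D (C :\: P) :\: DP X D P = D :\: DP X D C.
  apply/setP => t; rewrite !inE.
  case: (t \in D); rewrite ?andbF ?andbT //=.
  case tP: (X t \in P); first by move: (subsetP PsubC _ tP); rewrite inE => ->.
  by [].
rewrite E !Delta_diff -/a -SC; apply/andP; split=> //.
have [j' ej] : exists j', j = j'.+1.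
  case: (j) PC => [|j'] PC; last by exists j'.
  exfalso; move: PC; rewrite properE => /andP [_ /negP]; apply.
  by apply/subsetP => i; rewrite !inE.
rewrite ej /= in H1 H2 jm.
have j'm : (j' < m)%N by [].
set k0 : 'I_m := Ordinal j'm.
have Sj : \sum_(i < m | (i < j'.+1)%N) a i =
          a k0 + \sum_(i < m | (i < j')%N) a i.
  rewrite (bigD1 k0) //=; congr (_ + _); apply: eq_bigl => i.
  by rewrite ltnS -val_eqE /= [RHS]ltn_neqAle andbC.
have ak0 : 0 < a k0.
  move: H1 H2; rewrite /= Sj => H1 H2.
  have := le_lt_trans H1 H2; lra.
have apos : forall i, i \in C -> 0 < a i.
  move=> i; rewrite inE ej ltnS => ij.
  by apply: lt_le_trans ak0 _; apply: sorted.
have [k kP] : exists k, k \in P.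
  by case/set0Pn: P0 => k kP; exists k.
have kC := subsetP PsubC _ kP.
have le1 : \sum_(i in C :\: P) a i <= \sum_(i in C :\ k) a i.
  rewrite [X in _ <= X](big_setID (C :\: P)) /=.
  have -> : (C :\ k) :&: (C :\: P) = C :\: P.
    apply/setP => i; rewrite !in_setI !in_setD !in_set1.
    case: (eqVneq i k) => [->|]; rewrite ?kP ?andbF //= => _.
    by case: (i \in C); case: (i \in P).
  rewrite lerDl; apply: sumr_ge0.
  by move=> i; rewrite !in_setD !in_set1 => /andP [_ /andP [_ iC]]; apply: ltW; apply: apos.
have le2 : \sum_(i in C :\ k) a i = \sum_(i in C) a i - a k.
  by rewrite [in RHS](bigD1 k kC) /= addrC addrK; apply: eq_bigl => i; rewrite in_setD1 andbC.
have akk : a k0 <= a k.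
  by apply: sorted; move: kC; rewrite inE ej ltnS.
have SC' := SC; rewrite ej in SC'.
move: H2 Sj SC' le1 le2 akk; rewrite -/a => H2 Sj SC' le1 le2 akk.
lra.
Qed.
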